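(* Let $V$ be a finite set, let $\mathbb{F}$ be a field, let $A$ be a $V\times V$-matrix over $\mathbb{F}$, and let $Z\subseteq V$ be such that $A[Z,Z]$ is nonsingular. Then $p(A) = p(A*Z)$, where for a $V\times V$-matrix $B$ the nullity polynomial is $p(B) = \sum_{X,Y\subseteq V} y^{\,n(B[X,Y])}$ (a polynomial in the indeterminate $y$).
   Context: A $V\times V$-matrix over $\mathbb{F}$ is a function $V\times V\to\mathbb{F}$. For $X,Y\subseteq V$, $B[X,Y]$ denotes the restriction of $B$ to $X\times Y$, viewed as a linear map $\mathbb{F}^Y\to\mathbb{F}^X$, and $n(\cdot)$ denotes its nullity (dimension of its null space in $\mathbb{F}^Y$); the sum ranges over all pairs of subsets, including empty ones. For $Z\subseteq V$ with $A[Z,Z]$ nonsingular, the principal pivot transform $A*Z$ is the $V\times V$-matrix given blockwise (with $\bar Z=V\setminus Z$) by $(A*Z)[Z,Z]=A[Z,Z]^{-1}$, $(A*Z)[Z,\bar Z]=-A[Z,Z]^{-1}A[Z,\bar Z]$, $(A*Z)[\bar Z,Z]=A[\bar Z,Z]A[Z,Z]^{-1}$, $(A*Z)[\bar Z,\bar Z]=A[\bar Z,\bar Z]-A[\bar Z,Z]A[Z,Z]^{-1}A[Z,\bar Z]$. *)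

(* Defs.v *)
From mathcomp Require Import all_boot all_order all_algebra.
Set Implicit Arguments. Unset Strict Implicit. Unset Printing Implicit Defensive.
Import GRing.Theory.
Local Open Scope ring_scope.

Definition vmatrix (V : finType) (F : Type) := V -> V -> F.

Definition subvmx (V : finType) (F : Type) (B : vmatrix V F) (X Y : {set V})
  : 'M[F]_(#|X|, #|Y|) :=
  \matrix_(i < #|X|, j < #|Y|) B (enum_val i) (enum_val j).

(* Nullity of B[X,Y] viewed as a linear map F^Y -> F^X (acting on column
   vectors v with B[X,Y] v = 0): dimension of the (row) kernel of the transpose. *)
Definition nullity (V : finType) (F : fieldType) (B : vmatrix V F) (X Y : {set V})
  : nat := \rank (kermx (subvmx B X Y)^T).

Definition nullity_poly (V : finType) (F : fieldType) (B : vmatrix V F) : {poly int} :=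
  \sum_(X : {set V}) \sum_(Y : {set V}) 'X^(nullity B X Y).

Definition entry (V : finType) (F : fieldType) (X Y : {set V})
  (M : 'M[F]_(#|X|, #|Y|)) (x y : V) : F :=
  match [pick i : 'I_#|X| | enum_val i == x], [pick j : 'I_#|Y| | enum_val j == y] with
  | Some i, Some j => M i j
  | _, _ => 0
  end.

(* Principal pivot transform A * Z (meaningful when A[Z,Z] is nonsingular). *)
Definition ppt (V : finType) (F : fieldType) (A : vmatrix V F) (Z : {set V})
  : vmatrix V F :=
  let Zinv := entry (invmx (subvmx A Z Z)) in
  fun x y =>
    if x \in Z then
      if y \in Z then Zinv x y
      else - \sum_(z in Z) Zinv x z * A z y
    else
      if y \in Z then \sum_(z in Z) A x z * Zinv z y
      else A x y - \sum_(z in Z) \sum_(w in Z) A x z * Zinv z w * A w y.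

(* Main.v *)
Require Import Defs.
From mathcomp Require Import all_boot all_order all_algebra.
Set Implicit Arguments. Unset Strict Implicit. Unset Printing Implicit Defensive.
Import GRing.Theory.
Local Open Scope ring_scope.

Definition Ex {V : finType} {F : fieldType} (S : {set V}) : 'M[F]_(#|S|, #|V|) :=
  \matrix_(i, j) (j == enum_rank (enum_val i))%:R.

Definition fullmx {V : finType} {F : fieldType} (B : vmatrix V F) : 'M[F]_#|V| :=
  \matrix_(i, j) B (enum_val i) (enum_val j).

Lemma ExM_E {V : finType} {F : fieldType} (S : {set V}) k (M : 'M[F]_(#|V|, k)) i j :
  (Ex S *m M) i j = M (enum_rank (enum_val i)) j.
Proof.
rewrite !mxE (bigD1 (enum_rank (enum_val i))) //= big1 ?addr0.
  by rewrite mxE eqxx mul1r.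
by move=> l /negbTE Hl; rewrite mxE Hl mul0r.
Qed.

Lemma row_ExM {V : finType} {F : fieldType} (S : {set V}) k (M : 'M[F]_(#|V|, k)) i :
  row i (Ex S *m M) = row (enum_rank (enum_val i)) M.
Proof. by apply/rowP => j; rewrite mxE [RHS]mxE ExM_E. Qed.

Lemma row_Ex {V : finType} {F : fieldType} (S : {set V}) i :
  row i (Ex S : 'M[F]_(_,_)) = row (enum_rank (enum_val i)) 1%:M.
Proof. by rewrite -row_ExM mulmx1. Qed.

Lemma Ex_ExT {V : finType} {F : fieldType} (S : {set V}) :
  (Ex S : 'M[F]_(_,_)) *m (Ex S)^T = 1%:M.
Proof.
apply/matrixP => i j; rewrite ExM_E !mxE.
by rewrite (inj_eq enum_rank_inj) (inj_eq enum_val_inj).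
Qed.

Lemma Ex_ExCT {V : finType} {F : fieldType} (S : {set V}) :
  (Ex S : 'M[F]_(_,_)) *m (Ex (~: S))^T = 0.
Proof.
apply/matrixP => i j; rewrite ExM_E !mxE.
case: eqP => // /enum_rank_inj H.
have := enum_valP i; have := enum_valP j.
by rewrite -H inE => /negP.
Qed.

Lemma ExTEx {V : finType} {F : fieldType} (S : {set V}) k l :
  (((Ex S : 'M[F]_(_,_))^T *m Ex S) k l) = ((k == l) && (enum_val k \in S))%:R.
Proof.
rewrite !mxE.
case: (boolP (enum_val k \in S)) => Hk.
  rewrite (bigD1 (enum_rank_in Hk (enum_val k))) //= big1.
    by rewrite !mxE enum_rankK_in // enum_valK addr0 eqxx mul1r andbT eq_sym.
  move=> i Hi; rewrite !mxE.
  case: eqP => [Ek|]; last by rewrite mul0r.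
  exfalso; move/negP: Hi; apply; apply/eqP; apply: enum_val_inj.
  by rewrite enum_rankK_in // Ek enum_rankK.
rewrite andbF big1 // => i _; rewrite !mxE.
case: eqP => [Ek|]; last by rewrite mul0r.
by move: Hk; rewrite Ek enum_rankK enum_valP.
Qed.

Lemma ExTEx_sum {V : finType} {F : fieldType} (S : {set V}) :
  (Ex S : 'M[F]_(_,_))^T *m Ex S + (Ex (~: S))^T *m Ex (~: S) = 1%:M.
Proof.
apply/matrixP => k l; rewrite [LHS]mxE !ExTEx !mxE inE.
by case: (k == l); case: (enum_val k \in S); rewrite /= ?addr0 ?add0r.
Qed.

Definition Cmx {V : finType} {F : fieldType} (B : vmatrix V F) (X Y : {set V}) :=
  col_mx (Ex (~: Y)) (Ex X *m fullmx B).

Lemma subvmxT {V : finType} {F : fieldType} (B : vmatrix V F) (X Y : {set V}) :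
  (subvmx B X Y)^T = Ex Y *m (Ex X *m fullmx B)^T.
Proof.
apply/matrixP => i j; rewrite ExM_E [RHS]mxE ExM_E !mxE !enum_rankK //.
Qed.

Lemma Ex_free {V : finType} {F : fieldType} (S : {set V}) :
  row_free (Ex S : 'M[F]_(_,_)).
Proof. by apply/row_freeP; exists (Ex S)^T; apply: Ex_ExT. Qed.

Lemma nullityC {V : finType} {F : fieldType} (B : vmatrix V F) (X Y : {set V}) :
  nullity B X Y = (#|V| - \rank (Cmx B X Y))%N.
Proof.
rewrite /nullity subvmxT.
set S := Ex Y *m _.
have HC : (Cmx B X Y)^T = row_mx (Ex (~: Y))^T (Ex X *m fullmx B)^T.
  by rewrite /Cmx tr_col_mx.
have := mulmx_ker (Cmx B X Y)^T; rewrite {2}HC mul_mx_row => /eqP.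
rewrite row_mx_eq0 => /andP[/eqP H1 /eqP H2].
have E1 : kermx (Cmx B X Y)^T = kermx (Cmx B X Y)^T *m (Ex Y)^T *m Ex Y.
  by rewrite -mulmxA -[LHS]mulmx1 -(ExTEx_sum Y) mulmxDr !mulmxA H1 mul0mx addr0.
have Hle : (kermx S *m Ex Y <= kermx (Cmx B X Y)^T)%MS.
  apply/sub_kermxP.
  rewrite HC -mulmxA mul_mx_row Ex_ExCT -/S mul_mx_row mulmx0 mulmx_ker.
  by rewrite row_mx0.
have Hge : (kermx (Cmx B X Y)^T <= kermx S *m Ex Y)%MS.
  rewrite E1; apply: submxMr; apply/sub_kermxP.
  rewrite /S !mulmxA -E1; exact: H2.
rewrite -(mxrankMfree (kermx S) (Ex_free Y)).
have -> : \rank (kermx S *m Ex Y) = \rank (kermx (Cmx B X Y)^T).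
  by apply/eqP; rewrite eqn_leq (mxrankS Hle) (mxrankS Hge).
by rewrite mxrank_ker mxrank_tr.
Qed.

Lemma entry_val {V : finType} {F : fieldType} (X Y : {set V}) (M : 'M[F]_(#|X|, #|Y|)) i j :
  entry M (enum_val i) (enum_val j) = M i j.
Proof.
rewrite /entry; case: pickP => [i' /eqP/enum_val_inj ->|/(_ i)]; last by rewrite eqxx.
by case: pickP => [j' /eqP/enum_val_inj ->|/(_ j)]; last by rewrite eqxx.
Qed.

Lemma sumV {V : finType} {F : fieldType} (f : V -> F) :
  \sum_(k < #|V|) f (enum_val k) = \sum_x f x.
Proof.
rewrite [RHS](reindex (fun k : 'I_#|V| => enum_val k)) //.
by exists enum_rank => x _; rewrite ?enum_valK ?enum_rankK.
Qed.

Lemma invR {V : finType} {F : fieldType} (A : vmatrix V F) (Z : {set V}) v w :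
  subvmx A Z Z \in unitmx -> v \in Z -> w \in Z ->
  \sum_(x in Z) A v x * entry (invmx (subvmx A Z Z)) x w = (v == w)%:R.
Proof.
move=> HU Hv Hw.
have [a <-] : exists a : 'I_#|Z|, enum_val a = v.
  by exists (enum_rank_in Hv v); rewrite enum_rankK_in.
have [b <-] : exists b : 'I_#|Z|, enum_val b = w.
  by exists (enum_rank_in Hw w); rewrite enum_rankK_in.
rewrite big_enum_val (inj_eq enum_val_inj).
have := congr1 (fun M : 'M[F]_#|Z| => M a b) (mulmxV HU); rewrite !mxE => <-.
by apply: eq_bigr => i _; rewrite entry_val mxE.
Qed.

Lemma invL {V : finType} {F : fieldType} (A : vmatrix V F) (Z : {set V}) v w :
  subvmx A Z Z \in unitmx -> v \in Z -> w \in Z ->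
  \sum_(x in Z) entry (invmx (subvmx A Z Z)) v x * A x w = (v == w)%:R.
Proof.
move=> HU Hv Hw.
have [a <-] : exists a : 'I_#|Z|, enum_val a = v.
  by exists (enum_rank_in Hv v); rewrite enum_rankK_in.
have [b <-] : exists b : 'I_#|Z|, enum_val b = w.
  by exists (enum_rank_in Hw w); rewrite enum_rankK_in.
rewrite big_enum_val (inj_eq enum_val_inj).
have := congr1 (fun M : 'M[F]_#|Z| => M a b) (mulVmx HU); rewrite !mxE => <-.
by apply: eq_bigr => i _; rewrite entry_val mxE.
Qed.

Lemma pptE {V : finType} {F : fieldType} (A : vmatrix V F) (Z : {set V}) x y :
  ppt A Z x y =
    if x \in Z then
      if y \in Z then entry (invmx (subvmx A Z Z)) x y
      else - \sum_(z in Z) entry (invmx (subvmx A Z Z)) x z * A z y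
    else
      if y \in Z then \sum_(z in Z) A x z * entry (invmx (subvmx A Z Z)) z y
      else A x y - \sum_(z in Z) \sum_(w in Z) A x z * entry (invmx (subvmx A Z Z)) z w * A w y.
Proof. by []. Qed.

Lemma sum_split {V : finType} {F : fieldType} (Z : {set V}) (g h : V -> F) w :
  \sum_x g x * (if x \in Z then h x else (x == w)%:R)
  = \sum_(x in Z) g x * h x + (if w \in Z then 0 else g w).
Proof.
rewrite (bigID (mem Z)) /=; congr (_ + _).
  by apply: eq_bigr => x ->.
case: ifP => Hw.
  rewrite big1 // => x Hx; rewrite (negbTE Hx); case: eqP => [Exw|]; last by rewrite mulr0.
  by move: Hx; rewrite Exw Hw.
rewrite (bigD1 w) /=; last by rewrite Hw.
rewrite Hw eqxx mulr1 big1 ?addr0 // => x /andP[/negbTE Hx /negbTE ->]; by rewrite Hx mulr0.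
Qed.

Definition Tmx {V : finType} {F : fieldType} (A : vmatrix V F) (Z : {set V}) : 'M[F]_#|V| :=
  \matrix_(k, l) if enum_val k \in Z then ppt A Z (enum_val k) (enum_val l)
                 else (enum_val k == enum_val l)%:R.

Definition Tpmx {V : finType} {F : fieldType} (A : vmatrix V F) (Z : {set V}) : 'M[F]_#|V| :=
  \matrix_(k, l) if enum_val k \in Z then A (enum_val k) (enum_val l)
                 else (enum_val k == enum_val l)%:R.

Lemma Tunit {V : finType} {F : fieldType} (A : vmatrix V F) (Z : {set V}) :
  subvmx A Z Z \in unitmx -> Tmx A Z \in unitmx.
Proof.
move=> HU.
suff H : Tmx A Z *m Tpmx A Z = 1%:M by case: (mulmx1_unit H).
apply/matrixP => k l; rewrite !mxE /Tmx /Tpmx.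
rewrite -(inj_eq enum_val_inj).
set v := enum_val k; set w := enum_val l.
rewrite (eq_bigr (fun m => (if v \in Z then ppt A Z v (enum_val m) else (v == enum_val m)%:R) *
     (if enum_val m \in Z then A (enum_val m) w else (enum_val m == w)%:R))); last first.
  by move=> m _; rewrite !mxE.
pose f := fun x => (if v \in Z then ppt A Z v x else (v == x)%:R) *
     (if x \in Z then A x w else (x == w)%:R).
rewrite (eq_bigr (fun m => f (enum_val m))) // sumV /f.
case Hv: (v \in Z).
  rewrite sum_split.
  case Hw: (w \in Z).
    rewrite addr0 -(invL HU Hv Hw); apply: eq_bigr => x Hx.
    by rewrite pptE Hv Hx.
  rewrite [ppt A Z v w]pptE Hv Hw.
  rewrite (eq_bigr (fun x => entry (invmx (subvmx A Z Z)) v x * A x w)).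
    rewrite addrN; case: eqP => // Evw; by move: Hv; rewrite Evw Hw.
  by move=> x Hx; rewrite pptE Hv Hx.
rewrite (bigD1 v) //= eqxx mul1r Hv big1 ?addr0 // => x /negbTE.
by rewrite eq_sym => ->; rewrite mul0r.
Qed.

Lemma rowT {V : finType} {F : fieldType} (A : vmatrix V F) (Z : {set V}) v :
  row (enum_rank v) (Tmx A Z) =
  if v \in Z then row (enum_rank v) (fullmx (ppt A Z)) else row (enum_rank v) 1%:M.
Proof.
case Hv: (v \in Z); apply/rowP => l; rewrite /Tmx !mxE enum_rankK Hv //.
by rewrite -(inj_eq enum_val_inj) enum_rankK.
Qed.

Lemma rowAT {V : finType} {F : fieldType} (A : vmatrix V F) (Z : {set V}) v :
  subvmx A Z Z \in unitmx ->
  row (enum_rank v) (fullmx A *m Tmx A Z) =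
  if v \in Z then row (enum_rank v) 1%:M else row (enum_rank v) (fullmx (ppt A Z)).
Proof.
move=> HU; apply/rowP => l; rewrite [LHS]mxE.
have -> : (fullmx A *m Tmx A Z) (enum_rank v) l =
   \sum_x A v x * (if x \in Z then ppt A Z x (enum_val l) else (x == enum_val l)%:R).
  rewrite mxE.
  pose f := fun x => A v x * (if x \in Z then ppt A Z x (enum_val l) else (x == enum_val l)%:R).
  rewrite (eq_bigr (fun m => f (enum_val m))) ?sumV // => m _.
  by rewrite /Tmx !mxE enum_rankK.
set w := enum_val l.
rewrite sum_split.
case Hv: (v \in Z); rewrite !mxE.
  have -> : (enum_rank v == l) = (v == w) by rewrite -(inj_eq enum_val_inj) enum_rankK.
  case Hw: (w \in Z).
    rewrite addr0 -(invR HU Hv Hw); apply: eq_bigr => x Hx.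
    by rewrite pptE Hx Hw.
  rewrite (eq_bigr (fun x => - (A v x * \sum_(z in Z) entry (invmx (subvmx A Z Z)) x z * A z w))); last first.
    by move=> x Hx; rewrite pptE Hx Hw mulrN.
  rewrite sumrN.
  rewrite (eq_bigr (fun x => \sum_(z in Z) A v x * entry (invmx (subvmx A Z Z)) x z * A z w)); last first.
    by move=> x _; rewrite mulr_sumr; apply: eq_bigr => z _; rewrite mulrA.
  rewrite exchange_big /=.
  rewrite (eq_bigr (fun z => (v == z)%:R * A z w)); last first.
    by move=> z Hz; rewrite -mulr_suml invR.
  rewrite (bigD1 v) //= eqxx mul1r big1 ?addr0; last first.
    by move=> z /andP[_ /negbTE]; rewrite eq_sym => ->; rewrite mul0r.
  rewrite addNr; case: eqP => // Evw; by move: Hv; rewrite Evw Hw.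
rewrite enum_rankK pptE Hv.
case Hw: (w \in Z).
  by rewrite addr0; apply: eq_bigr => x Hx; rewrite pptE Hx Hw.
rewrite addrC; congr (_ + _).
rewrite -sumrN; apply: eq_bigr => x Hx; rewrite pptE Hx Hw mulrN mulr_sumr; congr (- _).
by apply: eq_bigr => z _; rewrite mulrA.
Qed.

Lemma sub_col_mxl {F : fieldType} m1 m2 n (A : 'M[F]_(m1, n)) (B : 'M[F]_(m2, n)) :
  (A <= col_mx A B)%MS.
Proof. by rewrite -addsmxE addsmxSl. Qed.

Lemma sub_col_mxr {F : fieldType} m1 m2 n (A : 'M[F]_(m1, n)) (B : 'M[F]_(m2, n)) :
  (B <= col_mx A B)%MS.
Proof. by rewrite -addsmxE addsmxSr. Qed.

Lemma inC_e {V : finType} {F : fieldType} (B : vmatrix V F) (X Y : {set V}) v :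
  v \notin Y -> (row (enum_rank v) 1%:M <= Cmx B X Y)%MS.
Proof.
move=> Hv'; have Hv : v \in ~: Y by rewrite inE.
have [i <-] : exists i : 'I_#|~: Y|, enum_val i = v.
  by exists (enum_rank_in Hv v); rewrite enum_rankK_in.
rewrite -row_Ex; apply: submx_trans (row_sub _ _) _; exact: sub_col_mxl.
Qed.

Lemma inC_f {V : finType} {F : fieldType} (B : vmatrix V F) (X Y : {set V}) v :
  v \in X -> (row (enum_rank v) (fullmx B) <= Cmx B X Y)%MS.
Proof.
move=> Hv.
have [i <-] : exists i : 'I_#|X|, enum_val i = v.
  by exists (enum_rank_in Hv v); rewrite enum_rankK_in.
rewrite -row_ExM; apply: submx_trans (row_sub _ _) _; exact: sub_col_mxr.
Qed.

Definition sw {V : finType} (Z X Y : {set V}) := (X :\: Z) :|: (Z :\: Y).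

Lemma rank_swap {V : finType} {F : fieldType} (A : vmatrix V F) (Z X Y : {set V}) :
  subvmx A Z Z \in unitmx ->
  \rank (Cmx A (sw Z X Y) (sw Z Y X)) = \rank (Cmx (ppt A Z) X Y).
Proof.
move=> HU.
have HT : row_free (Tmx A Z) by rewrite row_free_unit; exact: Tunit.
rewrite -(mxrankMfree (Cmx A (sw Z X Y) (sw Z Y X)) HT).
set C1 := Cmx A _ _.
have hT : forall v, v \notin sw Z Y X -> (row (enum_rank v) (Tmx A Z) <= C1 *m Tmx A Z)%MS.
  move=> v Hv.
  have -> : row (enum_rank v) (Tmx A Z) = row (enum_rank v) 1%:M *m Tmx A Z.
    by rewrite -row_mul mul1mx.
  by apply: submxMr; apply: inC_e.
have hAT : forall v, v \in sw Z X Y -> (row (enum_rank v) (fullmx A *m Tmx A Z) <= C1 *m Tmx A Z)%MS.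
  move=> v Hv; rewrite row_mul; apply: submxMr; exact: inC_f.
apply/eqP; rewrite eqn_leq; apply/andP; split; apply: mxrankS.
  rewrite /C1 /Cmx mul_col_mx col_mx_sub; apply/andP; split; apply/row_subP => i.
    have Hv := enum_valP i; rewrite row_ExM rowT.
    move: Hv; set v := enum_val i => Hv.
    case Hz: (v \in Z).
      apply: inC_f; move: Hv; rewrite !inE Hz /=.
      by case: (v \in X); case: (v \in Y).
    apply: inC_e; move: Hv; rewrite !inE Hz /=.
    by case: (v \in X); case: (v \in Y).
  have Hv := enum_valP i; rewrite -mulmxA row_ExM (rowAT _ HU).
  move: Hv; set v := enum_val i => Hv.
  case Hz: (v \in Z).
    apply: inC_e; move: Hv; rewrite !inE Hz /=.
    by case: (v \in X); case: (v \in Y).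
  apply: inC_f; move: Hv; rewrite !inE Hz /=.
  by case: (v \in X); case: (v \in Y).
rewrite /Cmx col_mx_sub; apply/andP; split; apply/row_subP => i.
  have Hv := enum_valP i; rewrite row_Ex.
  move: Hv; set v := enum_val i => Hv.
  case Hz: (v \in Z).
    have <- : row (enum_rank v) (fullmx A *m Tmx A Z) = row (enum_rank v) 1%:M.
      by rewrite (rowAT _ HU) Hz.
    apply: hAT; move: Hv; rewrite !inE Hz /=.
    by case: (v \in X); case: (v \in Y).
  have <- : row (enum_rank v) (Tmx A Z) = row (enum_rank v) 1%:M.
    by rewrite rowT Hz.
  apply: hT; move: Hv; rewrite !inE Hz /=.
  by case: (v \in X); case: (v \in Y).
have Hv := enum_valP i; rewrite row_ExM.
move: Hv; set v := enum_val i => Hv.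
case Hz: (v \in Z).
  have <- : row (enum_rank v) (Tmx A Z) = row (enum_rank v) (fullmx (ppt A Z)).
    by rewrite rowT Hz.
  apply: hT; move: Hv; rewrite !inE Hz /=.
  by case: (v \in X); case: (v \in Y).
have <- : row (enum_rank v) (fullmx A *m Tmx A Z) = row (enum_rank v) (fullmx (ppt A Z)).
  by rewrite (rowAT _ HU) Hz.
apply: hAT; move: Hv; rewrite !inE Hz /=.
by case: (v \in X); case: (v \in Y).
Qed.

Lemma sw_invol {V : finType} (Z X Y : {set V}) : sw Z (sw Z X Y) (sw Z Y X) = X.
Proof.
apply/setP => v; rewrite !inE.
by case: (v \in Z); case: (v \in X); case: (v \in Y).
Qed.

Theorem corollary2 (V : finType) (F : fieldType) (A : vmatrix V F) (Z : {set V}) :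
  subvmx A Z Z \in unitmx ->
  nullity_poly A = nullity_poly (ppt A Z).
Proof.
move=> HU.
pose phi := fun p : {set V} * {set V} => (sw Z p.1 p.2, sw Z p.2 p.1).
have phiK : involutive phi.
  by move=> [X Y]; rewrite /phi /= !sw_invol.
rewrite /nullity_poly !pair_bigA [RHS](reindex_inj (inv_inj phiK)).
apply: eq_bigr => [[X Y]] _ /=.
by rewrite !nullityC -rank_swap // !sw_invol.
Qed.
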